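(* Let $(G,\cdot,\curlywedge,\xi,\delta)$ satisfy the standing assumptions below. For every subset $H\subseteq G$, every natural number $n>1$ and every $z\in G$, we have $z\in F_\xi^{\,n}(H)$ if and only if there exist $x_i,y_i,t_i\in G^*$ and $u_i,v_i\in G$ ($1\le i\le 2^n-1$) such that: (a) $u_1\downarrow v_1$ and $(u_1\curlywedge v_1)x_1\boxdot y_1\leqslant zt_1$; (b) for every $i$ with $1\le i\le 2^{n-1}-1$: $u_{2i}\downarrow v_{2i}$, $(u_{2i}\curlywedge v_{2i})x_{2i}\boxdot y_{2i}\leqslant u_it_{2i}$, $u_{2i+1}\downarrow v_{2i+1}$ and $(u_{2i+1}\curlywedge v_{2i+1})x_{2i+1}\boxdot y_{2i+1}\leqslant v_ix_it_{2i+1}$; (c) for every $i$ with $2^{n-1}\le i\le 2^n-1$: $u_i\in H$ and $v_ix_i\in H$.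
   Context: Standing assumptions: $(G,\cdot)$ is a semigroup, $(G,\curlywedge)$ a semilattice on $G$, $\xi,\delta\subseteq G\times G$. Write $x\leqslant y$ iff $x\curlywedge y=x$ (semilattice order $\zeta$), $x\downarrow y$ iff $(x,y)\in\xi$, $x\vdash y$ iff $(x,y)\in\delta$. Assume $\xi$ is left regular ($(u,v)\in\xi\Rightarrow(xu,xv)\in\xi$), $\zeta\subseteq\xi$, $\delta$ is a left ideal ($(x,y)\in\delta\Rightarrow(ux,y)\in\delta$), and for all $x,y,z,u,v\in G$: $x(y\curlywedge z)=xy\curlywedge xz$; $x\leqslant y\wedge u\leqslant v\wedge y\downarrow v\Rightarrow u\downarrow x$; $x\downarrow y\Rightarrow(x\curlywedge y)u=xu\curlywedge yu$. $G^*=G\cup\{e\}$ is $(G,\cdot)$ with a new identity $e$ adjoined, with conventions $e\leqslant e$, $e\vdash e$, $x\vdash e$ for all $x\in G$. $a\boxdot b\leqslant c$ abbreviates $a\vdash b\wedge ab\leqslant c$. For $H\subseteq G$, $F_\xi(H)=\{z\in G:\exists u,v\in G,\ \exists x,y,t\in G^*$ with $u\downarrow v$, $(u\curlywedge v)x\boxdot y\leqslant zt$, $u\in H$, $vx\in H\}$; $F_\xi^{\,0}(H)=H$ and $F_\xi^{\,n}(H)=F_\xi(F_\xi^{\,n-1}(H))$ for $n\ge1$. *)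

(* Defs.v *)
From Stdlib Require Import Arith.

Set Implicit Arguments.

Section Defs.
Variable G : Type.
Variables (mul meet : G -> G -> G) (xi delta : G -> G -> Prop).

Definition sle (x y : G) : Prop := meet x y = x.

Record standing : Prop := {
  mul_assoc : forall x y z, mul x (mul y z) = mul (mul x y) z;
  meet_assoc : forall x y z, meet x (meet y z) = meet (meet x y) z;
  meet_comm : forall x y, meet x y = meet y x;
  meet_idem : forall x, meet x x = x;
  xi_left_regular : forall x u v, xi u v -> xi (mul x u) (mul x v);
  zeta_sub_xi : forall x y, sle x y -> xi x y;
  delta_left_ideal : forall u x y, delta x y -> delta (mul u x) y;
  mul_meet_distr : forall x y z, mul x (meet y z) = meet (mul x y) (mul x z);
  sle_xi_swap : forall x y u v, sle x y -> sle u v -> xi y v -> xi u x;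
  xi_meet_distr_r : forall x y u, xi x y -> mul (meet x y) u = meet (mul x u) (mul y u)
}.

(* G^* = G ∪ {e}, modelled as option G with None = e *)
Definition mulS (a b : option G) : option G :=
  match a, b with
  | None, _ => b
  | _, None => a
  | Some x, Some y => Some (mul x y)
  end.

Definition leS (a b : option G) : Prop :=
  match a, b with
  | None, None => True
  | Some x, Some y => sle x y
  | _, _ => False
  end.

Definition vdashS (a b : option G) : Prop :=
  match a, b with
  | _, None => True
  | Some x, Some y => delta x y
  | None, Some _ => False
  end.

(* a ⊡ b <= c  :=  a |- b /\ ab <= c *)
Definition boxle (a b c : option G) : Prop := vdashS a b /\ leS (mulS a b) c.

Definition inH (H : G -> Prop) (a : option G) : Prop :=
  match a with Some g => H g | None => False end.

Definition Fxi (H : G -> Prop) (z : G) : Prop :=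
  exists (u v : G) (x y t : option G),
    xi u v /\
    boxle (mulS (Some (meet u v)) x) y (mulS (Some z) t) /\
    H u /\ inH H (mulS (Some v) x).

Fixpoint Fxin (n : nat) (H : G -> Prop) : G -> Prop :=
  match n with
  | 0 => H
  | S m => Fxi (Fxin m H)
  end.

End Defs.

(* Main.v *)
Require Import Defs.
From Stdlib Require Import Arith Lia IndefiniteDescription.

Section Aux.
Variable G : Type.
Variables (mul meet : G -> G -> G) (xi delta : G -> G -> Prop).

Definition T (H : G -> Prop) (n : nat) (z : G) : Prop :=
   exists (x y t : nat -> option G) (u v : nat -> G),
     (xi (u 1) (v 1) /\
      boxle mul meet delta (mulS mul (Some (meet (u 1) (v 1))) (x 1)) (y 1)
            (mulS mul (Some z) (t 1))) /\
     (forall i, 1 <= i <= 2 ^ (n - 1) - 1 ->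
        xi (u (2 * i)) (v (2 * i)) /\
        boxle mul meet delta (mulS mul (Some (meet (u (2 * i)) (v (2 * i)))) (x (2 * i)))
              (y (2 * i)) (mulS mul (Some (u i)) (t (2 * i))) /\
        xi (u (2 * i + 1)) (v (2 * i + 1)) /\
        boxle mul meet delta
              (mulS mul (Some (meet (u (2 * i + 1)) (v (2 * i + 1)))) (x (2 * i + 1)))
              (y (2 * i + 1))
              (mulS mul (mulS mul (Some (v i)) (x i)) (t (2 * i + 1)))) /\
     (forall i, 2 ^ (n - 1) <= i <= 2 ^ n - 1 ->
        H (u i) /\ inH H (mulS mul (Some (v i)) (x i))).

Lemma Fxin_comm m H : Fxin mul meet xi delta (S m) H = Fxin mul meet xi delta m (Fxi mul meet xi delta H).
Proof. induction m; simpl in *; [reflexivity| now rewrite IHm]. Qed.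

Record Wit := { wu : G; wv : G; wx : option G; wy : option G; wt : option G }.

Definition Pw (H : G -> Prop) (a : option G) (w : Wit) : Prop :=
  xi (wu w) (wv w) /\
  boxle mul meet delta (mulS mul (Some (meet (wu w) (wv w))) (wx w)) (wy w) (mulS mul a (wt w)) /\
  H (wu w) /\ inH H (mulS mul (Some (wv w)) (wx w)).

Lemma ltb_t a b : a < b -> (a <? b) = true.
Proof. apply Nat.ltb_lt. Qed.
Lemma ltb_f a b : b <= a -> (a <? b) = false.
Proof. apply Nat.ltb_ge. Qed.

Lemma leaf_expand H m w : T (Fxi mul meet xi delta H) (S m) w <-> T H (S (S m)) w.
Proof.
  assert (Hp : forall k, 2 ^ S k = 2 * 2 ^ k) by reflexivity.
  assert (Hpos : forall k, 0 < 2 ^ k) by (intro k; apply Nat.neq_0_lt_0, Nat.pow_nonzero; lia).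
  unfold T. replace (S m - 1) with m by lia. replace (S (S m) - 1) with (S m) by lia.
  pose proof (Hpos m) as Pm. rewrite Hp in *.
  split.
  - intros (x & y & t & u & v & Ha & Hb & Hc). change (2 ^ S (S m)) with (2 * (2 * 2 ^ m)) in *; change (2 ^ S m) with (2 * 2 ^ m) in *.
    set (a := fun j => if Nat.even j then Some (u (Nat.div2 j))
                       else mulS mul (Some (v (Nat.div2 j))) (x (Nat.div2 j))).
    assert (Hex : forall j, exists w0 : Wit,
               2 * 2 ^ m <= j <= 2 * (2 * 2 ^ m) - 1 -> Pw H (a j) w0).
    { intro j.
      destruct (le_lt_dec (2 * 2 ^ m) j) as [L1|L1];
      [destruct (le_lt_dec j (2 * (2 * 2 ^ m) - 1)) as [L2|L2]|].
      2,3: exists (Build_Wit w w None None None); intros; lia.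
      pose proof (Nat.div2_odd j) as Ej.
      set (i := Nat.div2 j) in *.
      assert (Hi : 2 ^ m <= i <= 2 * 2 ^ m - 1)
        by (destruct (Nat.odd j); simpl in Ej; lia).
      destruct (Hc i Hi) as [Hu Hv].
      unfold a; fold i.
      destruct (Nat.even j) eqn:E.
      - destruct Hu as (u0 & v0 & x0 & y0 & t0 & A1 & A2 & A3 & A4).
        exists (Build_Wit u0 v0 x0 y0 t0); intros _; unfold Pw; simpl; tauto.
      - destruct (mulS mul (Some (v i)) (x i)) as [g|] eqn:Eg; [|destruct Hv].
        destruct Hv as (u0 & v0 & x0 & y0 & t0 & A1 & A2 & A3 & A4).
        exists (Build_Wit u0 v0 x0 y0 t0); intros _; unfold Pw; simpl; tauto. }
    apply functional_choice in Hex as [f Hf].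
    set (N := 2 * 2 ^ m).
    exists (fun j => if j <? N then x j else wx (f j)),
           (fun j => if j <? N then y j else wy (f j)),
           (fun j => if j <? N then t j else wt (f j)),
           (fun j => if j <? N then u j else wu (f j)),
           (fun j => if j <? N then v j else wv (f j)).
    split; [|split].
    + rewrite ltb_t by (unfold N; lia). exact Ha.
    + intros i Hi. rewrite ?Hp in Hi. rewrite ?Hp in Pm.
      rewrite (ltb_t i N) by (unfold N; lia).
      destruct (le_lt_dec (2 ^ m) i) as [L|L].
      * rewrite !ltb_f by (unfold N; lia).
        assert (A : 2 * 2 ^ m <= 2 * i <= 2 * (2 * 2 ^ m) - 1) by lia.
        assert (B : 2 * 2 ^ m <= 2 * i + 1 <= 2 * (2 * 2 ^ m) - 1) by lia.
        pose proof (Hf _ A) as PA. pose proof (Hf _ B) as PB.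
        unfold Pw, a in PA, PB.
        rewrite Nat.even_mul, Nat.div2_double in PA. simpl in PA.
        rewrite Nat.even_odd in PB. rewrite Nat.add_1_r, Nat.div2_succ_double in PB.
        rewrite Nat.add_1_r. tauto.
      * rewrite !ltb_t by (unfold N; lia).
        apply Hb; lia.
    + intros i Hi. rewrite ?Hp in Hi. rewrite ?Hp in Pm.
      rewrite ltb_f by (unfold N; lia).
      assert (A : 2 * 2 ^ m <= i <= 2 * (2 * 2 ^ m) - 1) by lia.
      destruct (Hf _ A) as (_ & _ & P3 & P4). tauto.
  - intros (x & y & t & u & v & Ha & Hb & Hc). change (2 ^ S (S m)) with (2 * (2 * 2 ^ m)) in *; change (2 ^ S m) with (2 * 2 ^ m) in *.
    exists x, y, t, u, v.
    split; [exact Ha|split].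
    + intros i Hi. rewrite ?Hp in Hi. rewrite ?Hp in Pm. apply Hb; lia.
    + intros i Hi. rewrite ?Hp in Hi. rewrite ?Hp in Pm.
      destruct (Hb i ltac:(lia)) as (B1 & B2 & B3 & B4).
      destruct (Hc (2 * i) ltac:(lia)) as [C1 C2].
      destruct (Hc (2 * i + 1) ltac:(lia)) as [D1 D2].
      split.
      * exists (u (2 * i)), (v (2 * i)), (x (2 * i)), (y (2 * i)), (t (2 * i)). tauto.
      * destruct (mulS mul (Some (v i)) (x i)) as [g|] eqn:Eg.
        -- simpl. exists (u (2 * i + 1)), (v (2 * i + 1)), (x (2 * i + 1)), (y (2 * i + 1)), (t (2 * i + 1)). tauto.
        -- destruct (x i); discriminate.
Qed.

Lemma main_tree m : forall H w, Fxin mul meet xi delta (S m) H w <-> T H (S m) w.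
Proof.
  induction m; intros H w.
  - simpl. unfold T. simpl. split.
    + intros (u & v & x & y & t & A1 & A2 & A3 & A4).
      exists (fun _ => x), (fun _ => y), (fun _ => t), (fun _ => u), (fun _ => v).
      split; [tauto|split]; [intros; lia|].
      intros i _. tauto.
    + intros (x & y & t & u & v & Ha & Hb & Hc).
      destruct (Hc 1 ltac:(lia)).
      exists (u 1), (v 1), (x 1), (y 1), (t 1). tauto.
  - rewrite Fxin_comm. rewrite IHm. apply leaf_expand.
Qed.

End Aux.

Theorem proposition6 (G : Type) (mul meet : G -> G -> G) (xi delta : G -> G -> Prop)
  (Hst : standing mul meet xi delta)
  (H : G -> Prop) (n : nat) (z : G) :
  1 < n ->
  (Fxin mul meet xi delta n H z <->
   exists (x y t : nat -> option G) (u v : nat -> G),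
     (* (a) *)
     (xi (u 1) (v 1) /\
      boxle mul meet delta (mulS mul (Some (meet (u 1) (v 1))) (x 1)) (y 1)
            (mulS mul (Some z) (t 1))) /\
     (* (b) *)
     (forall i, 1 <= i <= 2 ^ (n - 1) - 1 ->
        xi (u (2 * i)) (v (2 * i)) /\
        boxle mul meet delta (mulS mul (Some (meet (u (2 * i)) (v (2 * i)))) (x (2 * i)))
              (y (2 * i)) (mulS mul (Some (u i)) (t (2 * i))) /\
        xi (u (2 * i + 1)) (v (2 * i + 1)) /\
        boxle mul meet delta
              (mulS mul (Some (meet (u (2 * i + 1)) (v (2 * i + 1)))) (x (2 * i + 1)))
              (y (2 * i + 1))
              (mulS mul (mulS mul (Some (v i)) (x i)) (t (2 * i + 1)))) /\
     (* (c) *)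
     (forall i, 2 ^ (n - 1) <= i <= 2 ^ n - 1 ->
        H (u i) /\ inH H (mulS mul (Some (v i)) (x i)))).
Proof.
  intros Hn. destruct n as [|m]; [lia|].
  exact (@main_tree G mul meet xi delta m H z).
Qed.
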